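(* Suppose that for every $\theta\in\Theta$, $u_\theta:\mathbb R^{d_x}\to\mathbb R$ is concave and differentiable with $\|\nabla u_\theta(x)\|\le B_u$ for all $x$ and $\nabla u_\theta$ $L_u$-Lipschitz, and that $\beta_{\max}L_u<1$. Then for all $\beta,\beta'\in[\beta_{\min},\beta_{\max}]$ and $\theta\in\Theta$, $$\mathcal W(\mathcal D_\beta(\theta),\mathcal D_{\beta'}(\theta))\le\frac{B_u}{1-\beta_{\max}L_u}|\beta-\beta'|,$$ i.e. the atlas is $\epsilon_W$-smooth in Wasserstein distance with $\epsilon_W\le B_u/(1-\beta_{\max}L_u)$.
   Context: Strategic regression: $0<\beta_{\min}\le\beta_{\max}$. For $\beta\in[\beta_{\min},\beta_{\max}]$, $\theta\in\Theta$, and $x_0\in\mathbb R^{d_x}$, the best response is $g_\beta(x_0,\theta)=\arg\max_{x\in\mathbb R^{d_x}}\big(u_\theta(x)-\frac{1}{2\beta}\|x-x_0\|^2\big)$. Given a base distribution $\mathcal D_0$ of feature–label pairs $(x_0,y)$, the atlas is defined by: $(x,y)\sim\mathcal D_\beta(\theta)$ iff $(x_0,y)\sim\mathcal D_0$ and $x=g_\beta(x_0,\theta)$. $\mathcal W$ denotes the Wasserstein-1 distance (Euclidean norm on $(x,y)$). *)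

(* Defs.v *)
From HB Require Import structures.
From mathcomp Require Import all_boot all_order all_algebra.
From mathcomp Require Import all_classical all_reals all_analysis.
Set Implicit Arguments. Unset Strict Implicit. Unset Printing Implicit Defensive.
Import Order.TTheory GRing.Theory Num.Theory.
Import numFieldNormedType.Exports.
Local Open Scope classical_set_scope.
Local Open Scope ring_scope.

Section defs.
Variable R : realType.

Definition enorm n (v : 'rV[R]_n) : R := Num.sqrt (\sum_i v ord0 i ^+ 2).

Definition grad n (f : 'rV[R]_n -> R) (x : 'rV[R]_n) : 'rV[R]_n :=
  \row_i ('D_(delta_mx ord0 i) f x).

Definition concave n (f : 'rV[R]_n -> R) : Prop :=
  forall (x y : 'rV[R]_n) (t : R), 0 <= t <= 1 ->
    t * f x + (1 - t) * f y <= f (t *: x + (1 - t) *: y).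

Definition best_response n (u : 'rV[R]_n -> R) (beta : R) (x0 : 'rV[R]_n) : 'rV[R]_n :=
  xget 0 [set x | forall z : 'rV[R]_n,
     u z - enorm (z - x0) ^+ 2 / (2 * beta) <= u x - enorm (x - x0) ^+ 2 / (2 * beta)].

Definition data_space n := ('rV[R]_n * R)%type.

Definition Zb n := g_sigma_algebraType (@open (data_space n)).

Definition zdist n (z z' : data_space n) : R :=
  Num.sqrt (\sum_i (z.1 ord0 i - z'.1 ord0 i) ^+ 2 + (z.2 - z'.2) ^+ 2).

Definition coupling n (mu nu : set (Zb n) -> \bar R)
  (pi : probability (Zb n * Zb n)%type R) : Prop :=
  forall A : set (Zb n), measurable A ->
    pi (fst @^-1` A) = mu A /\ pi (snd @^-1` A) = nu A.

Definition W1 n (mu nu : set (Zb n) -> \bar R) : \bar R :=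
  ereal_inf [set (\int[pi]_p (zdist p.1 p.2)%:E)%E
             | pi in [set pi | coupling mu nu pi]].

Definition atlas n (D0 : probability (Zb n) R) (u : 'rV[R]_n -> R) (beta : R)
  : set (Zb n) -> \bar R :=
  pushforward D0 (fun z : Zb n => ((best_response u beta z.1, z.2) : Zb n)).
End defs.

(* Main.v *)
Require Import Defs.
From HB Require Import structures.
From mathcomp Require Import all_boot all_order all_algebra.
From mathcomp Require Import all_classical all_reals all_analysis.
From mathcomp Require Import measurable_realfun.
From mathcomp Require Import ring lra zify.
Import Order.TTheory GRing.Theory Num.Theory.
Import numFieldNormedType.Exports.
Import numFieldNormedType.Exports.
Set Implicit Arguments. Unset Strict Implicit. Unset Printing Implicit Defensive.
Local Open Scope classical_set_scope.
Local Open Scope ring_scope.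

Section eucl.
Variables (R : realType) (n : nat).
Implicit Types (a b c : 'rV[R]_n).

Definition dot a b : R := \sum_i a ord0 i * b ord0 i.

Lemma dotC a b : dot a b = dot b a.
Proof. by apply: eq_bigr => i _; rewrite mulrC. Qed.
Lemma dotDl a b c : dot (a + b) c = dot a c + dot b c.
Proof. by rewrite /dot -big_split; apply: eq_bigr => i _; rewrite mxE mulrDl. Qed.
Lemma dotNl a b : dot (- a) b = - dot a b.
Proof. by rewrite /dot -sumrN; apply: eq_bigr => i _; rewrite mxE mulNr. Qed.
Lemma dotBl a b c : dot (a - b) c = dot a c - dot b c.
Proof. by rewrite dotDl dotNl. Qed.
Lemma dotZl k a b : dot (k *: a) b = k * dot a b.
Proof. by rewrite /dot mulr_sumr; apply: eq_bigr => i _; rewrite mxE mulrA. Qed.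
Lemma dotDr a b c : dot a (b + c) = dot a b + dot a c.
Proof. by rewrite dotC dotDl !(dotC a). Qed.
Lemma dotBr a b c : dot a (b - c) = dot a b - dot a c.
Proof. by rewrite dotC dotBl !(dotC a). Qed.
Lemma dotZr k a b : dot a (k *: b) = k * dot a b.
Proof. by rewrite dotC dotZl dotC. Qed.
Lemma dot_ge0 a : 0 <= dot a a.
Proof. by apply: sumr_ge0 => i _; rewrite -expr2 sqr_ge0. Qed.
Lemma dot_eq0 a : dot a a = 0 -> a = 0.
Proof.
move=> h; apply/rowP => i; rewrite mxE.
have /psumr_eq0P : forall i, true -> 0 <= a ord0 i * a ord0 i.
  by move=> j _; rewrite -expr2 sqr_ge0.
by move=> /(_ h i isT) /eqP; rewrite mulf_eq0 orbb => /eqP.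
Qed.

Lemma enorm_dot a : enorm a = Num.sqrt (dot a a).
Proof. by rewrite /enorm /dot; congr Num.sqrt; apply: eq_bigr => i _; rewrite expr2. Qed.
Lemma enorm_ge0 a : 0 <= enorm a.
Proof. exact: sqrtr_ge0. Qed.
Lemma enorm_sq a : enorm a ^+ 2 = dot a a.
Proof. by rewrite enorm_dot sqr_sqrtr // dot_ge0. Qed.
End eucl.
Section eucl2.
Variables (R : realType) (n : nat).
Implicit Types (a b c : 'rV[R]_n).

Lemma dot_expand s a b : dot (s *: a - b) (s *: a - b) =
  s ^+ 2 * dot a a - 2 * s * dot a b + dot b b.
Proof. rewrite !(dotBl, dotBr, dotZl, dotZr) (dotC b a); ring. Qed.

Lemma dot_sqD a b : dot (a + b) (a + b) = dot a a + 2 * dot a b + dot b b.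
Proof. rewrite dotDl !dotDr (dotC b a); ring. Qed.

Lemma CS a b : dot a b <= enorm a * enorm b.
Proof.
have [A0|Apos] := eqVneq (dot a a) 0.
  rewrite (dot_eq0 A0) /dot big1 ?mulr_ge0 ?enorm_ge0 // => i _.
  by rewrite mxE mul0r.
have Ag : 0 < dot a a by rewrite lt_def Apos dot_ge0.
have := dot_ge0 ((dot a b / dot a a) *: a - b); rewrite dot_expand => h.
have h2 : dot a b ^+ 2 <= dot a a * dot b b.
  have e : (dot a b / dot a a) ^+ 2 * dot a a - 2 * (dot a b / dot a a) * dot a b
      + dot b b = (dot a a * dot b b - dot a b ^+ 2) / dot a a.
    by field; rewrite gt_eqF.
  rewrite e pmulr_lge0 ?invr_gt0 // subr_ge0 in h; exact: h.
have h3 : dot a b ^+ 2 <= (enorm a * enorm b) ^+ 2 by rewrite exprMn !enorm_sq.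
have := mulr_ge0 (enorm_ge0 a) (enorm_ge0 b).
nra.
Qed.

Lemma enorm_triangle a b : enorm (a + b) <= enorm a + enorm b.
Proof.
have h : enorm (a + b) ^+ 2 <= (enorm a + enorm b) ^+ 2.
  rewrite enorm_sq dotDl !dotDr sqrrD !enorm_sq (dotC b a).
  have := CS a b; lra.
have := enorm_ge0 (a + b); have := enorm_ge0 a; have := enorm_ge0 b.
nra.
Qed.

Lemma enormZ k a : enorm (k *: a) = `|k| * enorm a.
Proof.
by rewrite !enorm_dot dotZl dotZr mulrA -expr2 sqrtrM ?sqr_ge0 // sqrtr_sqr.
Qed.

Lemma enormN a : enorm (- a) = enorm a.
Proof. by rewrite -scaleN1r enormZ normrN normr1 mul1r. Qed.

Lemma enormB a b : enorm (a - b) = enorm (b - a).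
Proof. by rewrite -enormN opprB. Qed.

Lemma enorm_eq0 a : enorm a = 0 -> a = 0.
Proof.
move=> h; apply: dot_eq0; by rewrite -enorm_sq h expr0n.
Qed.
End eucl2.
Section gradlem.
Variables (R : realType) (n : nat).
Implicit Types (a b c x z : 'rV[R]_n).

Lemma D_grad (f : 'rV[R]_n -> R) x v : differentiable f x ->
  'D_v f x = dot (grad f x) v.
Proof.
move=> df; rewrite deriveE // {1}(row_sum_delta v) linear_sum /dot.
apply: eq_bigr => j _; rewrite linearZ /= mxE -deriveE // mulrC.
by [].
Qed.

Lemma concave_fo (f : 'rV[R]_n -> R) x z : concave f -> differentiable f x ->
  f z <= f x + dot (grad f x) (z - x).
Proof.
move=> cf df; rewrite -lerBlDl -D_grad //.
have dv : derivable f x (z - x) by apply: diff_derivable.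
have := cvg_dnbhs_at_right dv.
rewrite -/(derive f x (z - x)) => hcv.
apply: (cvgr_to_ge hcv).
near=> h.
have h0 : 0 < h by near: h; exact: nbhs_right_gt.
have h1 : h <= 1 by near: h; exact: nbhs_right_le.
have := cf z x h; rewrite ltW // h1 => /(_ isT) hc.
rewrite /= /shift /= ler_pdivlMl //.
have -> : h *: (z - x) + x = h *: z + (1 - h) *: x.
  by rewrite scalerBr scalerBl scale1r [x - _]addrC addrA.
lra.

Unshelve. all: end_near.
Qed.
End gradlem.
Section brlem.
Variables (R : realType) (n : nat).
Implicit Types (a b c x z : 'rV[R]_n).

Lemma phi_strict (u : 'rV[R]_n -> R) beta x0 x z : concave u -> differentiable u x ->
  0 < beta -> x = x0 + beta *: grad u x ->
  u z - enorm (z - x0) ^+ 2 / (2 * beta) <=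
  u x - enorm (x - x0) ^+ 2 / (2 * beta) - enorm (z - x) ^+ 2 / (2 * beta).
Proof.
move=> cu du b0 hx.
have hfo := concave_fo z cu du.
have e2 : x - x0 = beta *: grad u x by rewrite {1}hx addrC addKr.
have e1 : z - x0 = (z - x) + beta *: grad u x by rewrite -e2 addrA subrK.
rewrite !enorm_sq e1 e2 dot_sqD !(dotZl, dotZr) (dotC (z - x)).
set g := dot _ _ in hfo *; set A := dot (z - x) (z - x); set C := dot (grad u x) (grad u x).
have hA : 0 <= A by apply: dot_ge0.
have e3 : (A + 2 * (beta * g) + beta * (beta * C)) / (2 * beta) =
   A / (2 * beta) + g + beta * (beta * C) / (2 * beta).
  by field; rewrite gt_eqF.
rewrite e3; have : 0 <= A / (2 * beta) by rewrite divr_ge0 // mulr_ge0 // ltW.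
lra.
Qed.

Lemma br_fixed (u : 'rV[R]_n -> R) beta x0 x : concave u -> differentiable u x ->
  0 < beta -> x = x0 + beta *: grad u x -> best_response u beta x0 = x.
Proof.
move=> cu du b0 hx; apply: xget_unique.
  move=> z; have := phi_strict z cu du b0 hx.
  have : 0 <= enorm (z - x) ^+ 2 / (2 * beta) by rewrite divr_ge0 ?sqr_ge0 // mulr_ge0 // ltW.
  lra.
move=> y /= /(_ x); have := phi_strict y cu du b0 hx => h1 h2.
have h3 : enorm (y - x) ^+ 2 / (2 * beta) <= 0 by lra.
have h4 : enorm (y - x) ^+ 2 = 0.
  apply/eqP; rewrite eq_le sqr_ge0 andbT.
  by rewrite pmulr_lle0 ?invr_gt0 ?mulr_gt0 // in h3.
apply/eqP; rewrite -subr_eq0; apply/eqP/enorm_eq0.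
by move/eqP: h4; rewrite expf_eq0 /= => /eqP.
Qed.
End brlem.
Section normrel.
Variables (R : realType) (n : nat).
Implicit Types (v : 'rV[R]_n).

Lemma coord_le_mx v i : `|v ord0 i| <= `|v|.
Proof.
rewrite [leRHS]/Num.norm /= mx_normrE.
exact: (le_bigmax _ (fun ij : 'I_1 * 'I_n => `|v ij.1 ij.2|) (ord0, i)).
Qed.

Lemma coord_le_enorm v i : `|v ord0 i| <= enorm v.
Proof.
rewrite -sqrtr_sqr /enorm ler_sqrt; last by apply: sumr_ge0 => j _; apply: sqr_ge0.
rewrite (bigD1 i) //= lerDl; apply: sumr_ge0 => j _; apply: sqr_ge0.
Qed.

Lemma mx_le_enorm v : `|v| <= enorm v.
Proof.
rewrite [leLHS]/Num.norm /= mx_normrE; apply: bigmax_le; first exact: enorm_ge0.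
by move=> [a b] _ /=; rewrite (ord1 a); apply: coord_le_enorm.
Qed.

Lemma enorm_le_mx v : enorm v <= n.+1%:R * `|v|.
Proof.
have h : enorm v ^+ 2 <= (n.+1%:R * `|v|) ^+ 2.
  rewrite enorm_sq /dot.
  apply: (@le_trans _ _ (\sum_(i < n) `|v|^+2)).
    apply: ler_sum => i _; rewrite -expr2 -real_normK ?num_real //.
    by rewrite lerXn2r ?nnegrE ?normr_ge0 ?coord_le_mx.
  rewrite sumr_const card_ord -[_ *+ n]mulr_natl exprMn.
  apply: ler_wpM2r; first exact: sqr_ge0.
  by rewrite -natrX ler_nat; lia.
by rewrite -ler_sqr ?nnegrE ?mulr_ge0 ?enorm_ge0.
Qed.
End normrel.
Section fixpt.
Variables (R : realType) (n : nat).
Definition Vrow := 'rV[R]_n.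
HB.instance Definition _ := isPointed.Build Vrow 0.
HB.instance Definition _ := NormedModule.copy Vrow 'rV[R]_n.
HB.instance Definition _ := Complete.copy Vrow 'rV[R]_n.

Lemma iter_lip (T : 'rV[R]_n -> 'rV[R]_n) (q : R) :
  0 <= q -> (forall x y, enorm (T x - T y) <= q * enorm (x - y)) ->
  forall k x y, enorm (iter k T x - iter k T y) <= q ^+ k * enorm (x - y).
Proof.
move=> q0 hT; elim=> [|k ih] x y /=; first by rewrite expr0 mul1r.
apply: le_trans (hT _ _) _; rewrite exprS -mulrA ler_wpM2l //.
Qed.

Lemma fix_exists (T : 'rV[R]_n -> 'rV[R]_n) (q : R) : 0 <= q -> q < 1 ->
  (forall x y, enorm (T x - T y) <= q * enorm (x - y)) -> exists x, x = T x.
Proof.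
move=> q0 q1 hT.
pose K : R := n.+1%:R.
have Kpos : 0 < K by rewrite /K ltr0n.
have [m hm] : exists m, q ^+ m * K < 1.
  have qn : `|q| < 1 by rewrite ger0_norm.
  have := cvg_expr qn.
  move/cvgrPdist_lt => /(_ K^-1); rewrite invr_gt0 => /(_ Kpos) -[N _ hN].
  exists N; have := hN N (leqnn N); rewrite /= sub0r normrN ger0_norm ?exprn_ge0 // => h.
  by rewrite -ltr_pdivlMr // div1r.
pose S := iter m T.
have hS := iter_lip q0 hT m.
have qq0 : 0 <= q ^+ m * K by rewrite mulr_ge0 ?exprn_ge0 // ltW.
have ctr : is_contraction [fun of totalfun (S : Vrow -> Vrow)].
  exists (NngNum qq0); split => //= -[x y] _ /=.
  apply: le_trans (mx_le_enorm _) _.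
  apply: le_trans (hS x y) _.
  rewrite -mulrA ler_wpM2l ?exprn_ge0 //; exact: enorm_le_mx.
have [p _ hp] := banach_fixed_point ctr (@closedT _) (ex_intro _ 0 I).
exists p.
have hp' : S p = p by rewrite {2}hp.
have hTp : S (T p) = T p.
  by rewrite /S -iterSr iterS; congr T; exact: hp'.
have : enorm (p - T p) <= q ^+ m * enorm (p - T p).
  by rewrite -{1}hp' -{1}hTp hS.
have qm1 : q ^+ m < 1.
  apply: le_lt_trans hm; rewrite ler_peMr ?exprn_ge0 // /K ler1n //.
have := enorm_ge0 (p - T p) => h1 h2.
have h3 : enorm (p - T p) = 0 by nra.
by apply/eqP; rewrite -subr_eq0; apply/eqP/enorm_eq0.
Qed.
End fixpt.
Section brmain.
Variables (R : realType) (n : nat) (u : 'rV[R]_n -> R) (Bu Lu bmax : R).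
Hypothesis hconc : concave u.
Hypothesis hdiff : forall x, differentiable u x.
Hypothesis hB : forall x, enorm (grad u x) <= Bu.
Hypothesis hL : forall x y, enorm (grad u x - grad u y) <= Lu * enorm (x - y).
Hypothesis hbL : bmax * Lu < 1.

Lemma br_eq beta x0 : 0 < beta -> beta <= bmax ->
  best_response u beta x0 = x0 + beta *: grad u (best_response u beta x0).
Proof.
move=> b0 bm.
pose Lp := if 0 <= Lu then Lu else 0.
have hLp : forall x y, enorm (grad u x - grad u y) <= Lp * enorm (x - y).
  move=> x y; apply: le_trans (hL x y) _; apply: ler_wpM2r; first exact: enorm_ge0.
  by rewrite /Lp; case: ifP => // /negbT; rewrite -ltNge => /ltW.
have Lp0 : 0 <= Lp by rewrite /Lp; case: ifP.
have q1 : beta * Lp < 1.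
  rewrite /Lp; case: ifP => hl; last by rewrite mulr0.
  by apply: (le_lt_trans _ hbL); apply: ler_wpM2r.
have [p hp] : exists p, p = x0 + beta *: grad u p.
  apply: (@fix_exists _ _ _ (beta * Lp)); first by rewrite mulr_ge0 // ltW.
    exact: q1.
  move=> x y; rewrite opprD addrACA subrr add0r -scalerBr enormZ (ger0_norm (ltW b0)).
  by rewrite -mulrA; apply: ler_wpM2l; [exact: ltW | exact: hLp].
by rewrite (br_fixed hconc (hdiff p) b0 hp).
Qed.

Lemma br_stab beta beta' x0 : 0 < beta -> beta <= bmax -> 0 < beta' -> beta' <= bmax ->
  enorm (best_response u beta x0 - best_response u beta' x0)
    <= Bu / (1 - bmax * Lu) * `|beta - beta'|.
Proof.
move=> b0 bm b0' bm'.
set x := best_response u beta x0; set x' := best_response u beta' x0.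
have ex := br_eq x0 b0 bm; have ex' := br_eq x0 b0' bm'.
rewrite -/x -/x' in ex ex'.
have e1 : x - x' = (beta - beta') *: grad u x + beta' *: (grad u x - grad u x').
  rewrite {1}ex {1}ex' scalerBl scalerBr opprD addrACA subrr add0r addrA subrK.
  by [].
set e := enorm (x - x').
have h1 : e <= `|beta - beta'| * Bu + beta' * (Lu * e).
  have t := enorm_triangle ((beta - beta') *: grad u x) (beta' *: (grad u x - grad u x')).
  rewrite -e1 -/e in t; apply: le_trans t _.
  rewrite !enormZ (ger0_norm (ltW b0')); apply: lerD.
    by apply: ler_wpM2l => //.
  by apply: ler_wpM2l; [exact: ltW | exact: hL].
have h2 : 0 <= Lu * e by apply: le_trans (hL x x'); exact: enorm_ge0.
have h3 : beta' * (Lu * e) <= bmax * (Lu * e) by apply: ler_wpM2r.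
have d0 : 0 < 1 - bmax * Lu by rewrite subr_gt0.
rewrite mulrAC ler_pdivlMr //.
have : 0 <= `|beta - beta'| by [].
nra.
Qed.

Lemma br_lip beta x0 x1 : 0 < beta -> beta <= bmax ->
  enorm (best_response u beta x0 - best_response u beta x1)
    <= enorm (x0 - x1) / (1 - bmax * Lu).
Proof.
move=> b0 bm.
set x := best_response u beta x0; set x' := best_response u beta x1.
have ex := br_eq x0 b0 bm; have ex' := br_eq x1 b0 bm.
rewrite -/x -/x' in ex ex'.
have e1 : x - x' = (x0 - x1) + beta *: (grad u x - grad u x').
  by rewrite {1}ex {1}ex' scalerBr opprD addrACA.
set e := enorm (x - x').
have h1 : e <= enorm (x0 - x1) + beta * (Lu * e).
  have t := enorm_triangle (x0 - x1) (beta *: (grad u x - grad u x')).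
  rewrite -e1 -/e in t; apply: le_trans t _.
  rewrite !enormZ (ger0_norm (ltW b0)); apply: lerD => //.
  by apply: ler_wpM2l; [exact: ltW | exact: hL].
have h2 : 0 <= Lu * e by apply: le_trans (hL x x'); exact: enorm_ge0.
have h3 : beta * (Lu * e) <= bmax * (Lu * e) by apply: ler_wpM2r.
have d0 : 0 < 1 - bmax * Lu by rewrite subr_gt0.
rewrite ler_pdivlMr //.
nra.
Qed.
End brmain.
Section meas.
Variables (R : realType) (n : nat).
Local Notation D := (data_space R n).
Local Notation Z := (Zb R n).

Lemma meas_cont (f : D -> D) : continuous f -> measurable_fun setT (f : Z -> Z).
Proof.
move=> cf; apply: (@measurability _ _ Z Z setT f (@open D)) => //.
move=> _ [B oB <-]; apply: sub_sigma_algebra; rewrite setTI.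
exact: (proj1 (continuousP f) cf).
Qed.

Lemma meas_contR (f : D -> R) : continuous f -> measurable_fun setT (f : Z -> R).
Proof.
move=> cf; apply: (measurability _ (measurable_realfun.RGenOpens.measurableE R)).
move=> _ [_ [a [b ->]] <-]; apply: sub_sigma_algebra; rewrite setTI.
apply: (proj1 (continuousP f) cf); exact: interval_open.
Qed.

Lemma cont_fst : continuous (@fst 'rV[R]_n R).
Proof. move=> p; exact: cvg_fst. Qed.
Lemma cont_snd : continuous (@snd 'rV[R]_n R).
Proof. move=> p; exact: cvg_snd. Qed.

Lemma cont_coord i : continuous (fun z : D => z.1 ord0 i).
Proof.
move=> z; apply: (@continuous_comp _ _ _ fst (fun M : 'rV[R]_n => M ord0 i) z).
  exact: cont_fst.
exact: coord_continuous.
Qed.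
End meas.
Section meas2.
Variables (R : realType) (n : nat).
Local Notation D := (data_space R n).
Local Notation Z := (Zb R n).

Lemma meas_zdist : measurable_fun setT (fun p : (Z * Z)%type => (zdist p.1 p.2)%:E).
Proof.
apply/measurable_EFinP.
rewrite /zdist.
apply: (measurableT_comp (continuous_measurable_fun (@sqrt_continuous R))).
apply: measurable_funD.
  apply: measurable_sum => i.
  apply: measurable_funX; apply: measurable_funB.
    have h := measurableT_comp (meas_contR (@cont_coord R n i)) (@measurable_fst _ _ Z Z).
    exact: h.
  have h := measurableT_comp (meas_contR (@cont_coord R n i)) (@measurable_snd _ _ Z Z).
  exact: h.
apply: measurable_funX; apply: measurable_funB.
  have h := measurableT_comp (meas_contR (@cont_snd R n)) (@measurable_fst _ _ Z Z).
  exact: h.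
have h := measurableT_comp (meas_contR (@cont_snd R n)) (@measurable_snd _ _ Z Z).
exact: h.
Qed.
End meas2.
Section brcont.
Variables (R : realType) (n : nat) (u : 'rV[R]_n -> R) (Bu Lu bmax : R).
Hypothesis hconc : concave u.
Hypothesis hdiff : forall x, differentiable u x.
Hypothesis hL : forall x y, enorm (grad u x - grad u y) <= Lu * enorm (x - y).
Hypothesis hbL : bmax * Lu < 1.

Lemma br_cont beta : 0 < beta -> beta <= bmax -> continuous (best_response u beta).
Proof.
move=> b0 bm x; apply/(@cvgrPdist_lt _ _ _ (nbhs x) (nbhs_filter x)) => e e0.
pose c := 1 - bmax * Lu; have c0 : 0 < c by rewrite subr_gt0.
pose K : R := n.+1%:R; have K0 : 0 < K by rewrite /K ltr0n.
have d0 : 0 < e * c / K by rewrite divr_gt0 ?mulr_gt0.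
have : (fun y : 'rV[R]_n => y) @ x --> x := cvg_id.
move/cvgrPdist_lt => /(_ _ d0); apply: filterS => y hy.
apply: le_lt_trans (mx_le_enorm _) _.
apply: le_lt_trans (br_lip hconc hdiff hL hbL x y b0 bm) _.
rewrite ltr_pdivrMr //.
apply: le_lt_trans (enorm_le_mx _) _.
by rewrite mulrC -ltr_pdivlMr ?ltr0n.
Qed.
End brcont.

Unset Implicit Arguments.
Theorem claim1 (R : realType) (dx : nat) (Theta : Type)
  (u : Theta -> 'rV[R]_dx -> R) (Bu Lu beta_min beta_max : R)
  (D0 : probability (Zb R dx) R)
  (hbmin : 0 < beta_min) (hbminmax : beta_min <= beta_max)
  (hconc : forall th, concave (u th))
  (hdiff : forall th x, differentiable (u th) x)
  (hB : forall th x, enorm (grad (u th) x) <= Bu)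
  (hL : forall th x y, enorm (grad (u th) x - grad (u th) y) <= Lu * enorm (x - y))
  (hbL : beta_max * Lu < 1) :
  forall (beta beta' : R) (th : Theta),
    beta_min <= beta <= beta_max -> beta_min <= beta' <= beta_max ->
    (W1 (atlas D0 (u th) beta) (atlas D0 (u th) beta')
      <= (Bu / (1 - beta_max * Lu) * `|beta - beta'|)%:E)%E.
Proof.
move=> beta beta' th /andP[hb1 hb2] /andP[hb1' hb2'].
have b0 : 0 < beta := lt_le_trans hbmin hb1.
have b0' : 0 < beta' := lt_le_trans hbmin hb1'.
pose g := best_response (u th) beta; pose g' := best_response (u th) beta'.
pose G := fun z : data_space R dx => ((g z.1, z.2) : data_space R dx).
pose G' := fun z : data_space R dx => ((g' z.1, z.2) : data_space R dx).
have cG : continuous G.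
  move=> z; apply: (@cvg_pair _ _ _ (nbhs z) (nbhs (g z.1)) (nbhs z.2) _ _ _ (fun x => g x.1) snd).
    apply: (@continuous_comp _ _ _ fst g z); first exact: cont_fst.
    exact: (br_cont (hconc th) (hdiff th) (hL th) hbL b0 hb2).
  exact: cont_snd.
have cG' : continuous G'.
  move=> z; apply: (@cvg_pair _ _ _ (nbhs z) (nbhs (g' z.1)) (nbhs z.2) _ _ _ (fun x => g' x.1) snd).
    apply: (@continuous_comp _ _ _ fst g' z); first exact: cont_fst.
    exact: (br_cont (hconc th) (hdiff th) (hL th) hbL b0' hb2').
  exact: cont_snd.
pose F := fun z : Zb R dx => ((G z, G' z) : (Zb R dx * Zb R dx)%type).
have mF : measurable_fun setT F.
  exact: measurable_fun_pair (meas_cont cG) (meas_cont cG').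
pose pi := distribution D0 (mfun_Sub (mem_set mF)).
apply: (@le_trans _ _ (\int[pi]_p (zdist p.1 p.2)%:E))%E.
  apply: ereal_inf_lbound; exists pi; last by [].
  move=> A mA; split; reflexivity.
set C := Bu / (1 - beta_max * Lu) * `|beta - beta'|.
rewrite /pi ge0_integral_distribution; last 2 first.
- exact: meas_zdist.
- by move=> y; rewrite lee_fin sqrtr_ge0.
apply: (@le_trans _ _ (\int[D0]_x (C%:E))%E).
  apply: ge0_le_integral => //.
  - by move=> x _; rewrite /= lee_fin sqrtr_ge0.
  - apply: measurableT_comp => //; exact: meas_zdist.
  - move=> x _ /=; rewrite lee_fin /zdist /= subrr expr0n /= addr0.
    have -> : \sum_i (g x.1 ord0 i - g' x.1 ord0 i) ^+ 2 =
              \sum_i (g x.1 - g' x.1) ord0 i ^+ 2.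
      by apply: eq_bigr => i _; rewrite !mxE.
    rewrite -/(enorm (g x.1 - g' x.1)).
    exact: (br_stab (hconc th) (hdiff th) (hB th) (hL th) hbL).
rewrite integral_cst //.
rewrite [X in (_ * X <= _)%E]probability_setT.
by rewrite mule1.
Qed.
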